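(* Let $R$ and $S$ be semisimple rings, $(A,C)$ an almost-Koszul pair over $R$ with isomorphism $\theta'\colon C_1\to A^1$, and $(B,D)$ an almost-Koszul pair over $S$ with isomorphism $\theta''\colon D_1\to B^1$. Then $(A\times B,C\oplus D)$ is an almost-Koszul pair over $R\times S$ with respect to the isomorphism $\theta\colon C_1\oplus D_1\to A^1\times B^1$, $\theta(c,d)=(\theta'(c),\theta''(d))$. Moreover, this pair is Koszul if and only if both $(A,C)$ and $(B,D)$ are Koszul.
   Context: For a semisimple ring $K$ and $\otimes=\otimes_K$: a connected graded $K$-ring is an $\mathbb N$-graded algebra $A=\bigoplus A^n$ in $K$-bimodules with $A^0=K$ and multiplication components $\mu^{p,q}$; a connected graded $K$-coring is an $\mathbb N$-graded coalgebra $C=\bigoplus C_n$ in $K$-bimodules with $C_0=K$ and components $\Delta_{p,q}(c)=\sum c_{1,p}\otimes c_{2,q}$. An almost-Koszul pair consists of such $A$, $C$ and a bimodule isomorphism $\theta\colon C_1\to A^1$ with $\mu^{1,1}\circ(\theta\otimes\theta)\circ\Delta_{1,1}=0$ on $C_2$; it is Koszul if the complex $\mathrm K^l_{-1}=K$, $\mathrm K^l_n=A\otimes C_n$ ($n\ge0$), $d_0$ the augmentation $A\otimes C_0\cong A\to K$, $d_n(a\otimes c)=\sum a\theta(c_{1,1})\otimes c_{2,n-1}$, is exact. For an $R$-bimodule $V$ and an $S$-bimodule $W$, $V\oplus W$ is an $R\times S$-bimodule via $(r,s)(v,w)=(rv,sw)$, $(v,w)(r',s')=(vr',ws')$. $A\times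 B$ is the graded $R\times S$-ring with componentwise operations, $(A\times B)^n=A^n\times B^n$; $C\oplus D$ is the graded $R\times S$-coring with $(C\oplus D)_n=C_n\oplus D_n$ and $\Delta_{p,q}(c,d)=\sum(c_{1,p},0)\otimes_{R\times S}(c_{2,q},0)+\sum(0,d_{1,p})\otimes_{R\times S}(0,d_{2,q})$. *)

(* Defs.v *)
From mathcomp Require Import all_boot all_algebra.
Set Implicit Arguments.
Unset Strict Implicit.
Unset Printing Implicit Defensive.
Import GRing.Theory.
Local Open Scope ring_scope.

Definition left_ideal (K : pzRingType) (I : K -> Prop) : Prop :=
  [/\ I 0, (forall x y, I x -> I y -> I (x + y)) & (forall k x, I x -> I (k * x))].

Definition semisimple (K : pzRingType) : Prop :=
  forall I : K -> Prop, left_ideal I ->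
    exists J : K -> Prop, [/\ left_ideal J,
      (forall x, I x -> J x -> x = 0) &
      (forall x, exists a b, [/\ I a, J b & x = a + b])].

Record bimod (K : Type) := BiMod {
  bcar : zmodType;
  blact : K -> bcar -> bcar;
  bract : bcar -> K -> bcar }.
Arguments BiMod {K}.
Arguments bcar {K} b.
Arguments blact {K b} _ _.
Arguments bract {K b} _ _.

Definition is_bimod (K : pzRingType) (M : bimod K) : Prop :=
  let la := @blact K M in let ra := @bract K M in
  [/\ (forall k x y, la k (x + y) = la k x + la k y),
      (forall k k' x, la (k + k') x = la k x + la k' x),
      (forall k k' x, la (k * k') x = la k (la k' x)) &
      (forall x, la 1 x = x)] /\
  [/\ (forall k x y, ra (x + y) k = ra x k + ra y k),
      (forall k k' x, ra x (k + k') = ra x k + ra x k'),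
      (forall k k' x, ra x (k * k') = ra (ra x k) k'),
      (forall x, ra x 1 = x) &
      (forall k k' x, ra (la k x) k' = la k (ra x k'))].

(* Tensor products over K, presented by formal sums of pure tensors.  *)
(* A formal sum s : seq (M * N) stands for \sum_(x <- s) x.1 (x) x.2  *)
(* (negatives are (-m) (x) n).  Two formal sums define the same       *)
(* element of M (x)_K N iff every K-balanced biadditive map into an   *)
(* abelian group agrees on them (universal property of (x)_K).        *)
Definition balanced (K : Type) (M N G : zmodType)
  (ra : M -> K -> M) (la : K -> N -> N) (f : M -> N -> G) : Prop :=
  [/\ (forall m m' n, f (m + m') n = f m n + f m' n),
      (forall m n n', f m (n + n') = f m n + f m n') &
      (forall m k n, f (ra m k) n = f m (la k n))].

Definition tsum (M N : Type) (G : zmodType) (f : M -> N -> G) (s : seq (M * N)) : G :=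
  \sum_(x <- s) f x.1 x.2.

Definition teq (K : Type) (M N : zmodType) (ra : M -> K -> M) (la : K -> N -> N)
  (s t : seq (M * N)) : Prop :=
  forall (G : zmodType) (f : M -> N -> G), balanced ra la f -> tsum f s = tsum f t.

Definition tensor_eq (K : Type) (M N : bimod K) (s t : seq (bcar M * bcar N)) : Prop :=
  @teq K (bcar M) (bcar N) (@bract K M) (@blact K N) s t.

Definition balanced3 (K : Type) (M N P G : zmodType)
  (raM : M -> K -> M) (laN : K -> N -> N) (raN : N -> K -> N) (laP : K -> P -> P)
  (f : M -> N -> P -> G) : Prop :=
  [/\ (forall m m' n p, f (m + m') n p = f m n p + f m' n p),
      (forall m n n' p, f m (n + n') p = f m n p + f m n' p),
      (forall m n p p', f m n (p + p') = f m n p + f m n p'),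
      (forall m k n p, f (raM m k) n p = f m (laN k n) p) &
      (forall m n k p, f m (raN n k) p = f m n (laP k p))].

Definition tensor3_eq (K : Type) (M N P : bimod K)
  (s t : seq (bcar M * bcar N * bcar P)) : Prop :=
  forall (G : zmodType) (f : bcar M -> bcar N -> bcar P -> G),
    balanced3 (@bract K M) (@blact K N) (@bract K N) (@blact K P) f ->
    \sum_(x <- s) f x.1.1 x.1.2 x.2 = \sum_(x <- t) f x.1.1 x.1.2 x.2.

(* Connected graded K-rings.  A K-ring (monoid in K-bimodules) is a   *)
(* ring A with a ring morphism eta : K -> A; the grading is given by  *)
(* the homogeneous components ghom n = A^n; gaug is the augmentation  *)
(* A -> A^0 = K (determined by the other data via the axioms).        *)
Record gring (K : Type) := GRing_ {
  gcar : pzRingType;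
  geta : K -> gcar;
  ghom : nat -> gcar -> Prop;
  gaug : gcar -> K }.
Arguments GRing_ {K}.
Arguments gcar {K} g.
Arguments geta {K} g _.
Arguments ghom {K} g _ _.
Arguments gaug {K} g _.

Definition is_conn_graded_ring (K : pzRingType) (A : gring K) : Prop :=
  [/\
      (forall k k', geta A (k + k') = geta A k + geta A k'),
      (forall k k', geta A (k * k') = geta A k * geta A k') &
      geta A 1 = 1] /\
  [/\
      (forall n, ghom A n 0) &
      (forall n a b, ghom A n a -> ghom A n b -> ghom A n (a - b))] /\
  [/\
      (forall a, exists (N : nat) (f : nat -> gcar A),
          (forall i, ghom A i (f i)) /\ a = \sum_(i < N) f i),
      (forall (N : nat) (f : nat -> gcar A), (forall i, ghom A i (f i)) ->
          \sum_(i < N) f i = 0 -> forall i, (i < N)%N -> f i = 0) &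
      (forall p q a b, ghom A p a -> ghom A q b -> ghom A (p + q)%N (a * b))] /\
  [/\
      (forall a, ghom A 0 a <-> (exists k, a = geta A k)),
      injective (geta A) &
      [/\ (forall a b, gaug A (a + b) = gaug A a + gaug A b),
          (forall k, gaug A (geta A k) = k) &
          (forall n a, (0 < n)%N -> ghom A n a -> gaug A a = 0)]].

Definition gring_bimod (K : Type) (A : gring K) : bimod K :=
  BiMod (gcar A : zmodType) (fun k a => geta A k * a) (fun a k => a * geta A k).

(* Connected graded K-corings, given by their components C_n and the  *)
(* components Delta_{p,q} : C_n -> C_p (x)_K C_q (for p + q = n) of    *)
(* the comultiplication, together with the counit on C_0 = K.          *)
Record gcoring (K : Type) := GCoring {
  ccomp : nat -> bimod K;
  cdelta : forall n p q : nat, (p + q)%N = n ->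
             bcar (ccomp n) -> seq (bcar (ccomp p) * bcar (ccomp q));
  ceps0 : bcar (ccomp 0) -> K }.
Arguments GCoring {K}.
Arguments ccomp {K} g _.
Arguments cdelta {K} g {n p q} _ _.
Arguments ceps0 {K} g _.

Definition is_conn_graded_coring (K : pzRingType) (C : gcoring K) : Prop :=
  (forall n, is_bimod (ccomp C n)) /\
  [/\
      (forall n p q (H : (p + q)%N = n) c c',
         tensor_eq (cdelta C H (c + c')) (cdelta C H c ++ cdelta C H c')),
      (forall n p q (H : (p + q)%N = n) k c,
         tensor_eq (cdelta C H (blact k c))
                   [seq (blact k x.1, x.2) | x <- cdelta C H c]),
      (forall n p q (H : (p + q)%N = n) k c,
         tensor_eq (cdelta C H (bract c k))
                   [seq (x.1, bract x.2 k) | x <- cdelta C H c]) &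
      (forall p q r n (H : (p + q + r)%N = n) c,
         tensor3_eq
           (flatten [seq [seq (y.1, y.2, x.2) | y <- cdelta C (erefl (p + q)%N) x.1]
                    | x <- cdelta C H c])
           (flatten [seq [seq (x.1, y.1, y.2) | y <- cdelta C (erefl (q + r)%N) x.2]
                    | x <- cdelta C (etrans (addnA p q r) H) c]))] /\
  [/\
      [/\ (forall c c', ceps0 C (c + c') = ceps0 C c + ceps0 C c'),
          (forall k c, ceps0 C (blact k c) = k * ceps0 C c),
          (forall k c, ceps0 C (bract c k) = ceps0 C c * k) &
          bijective (ceps0 C)],
      (forall n (c : bcar (ccomp C n)),
         \sum_(x <- cdelta C (erefl (0 + n)%N) c) blact (ceps0 C x.1) x.2 = c) &
      (forall n (c : bcar (ccomp C n)),
         \sum_(x <- cdelta C (addn0 n) c) bract x.1 (ceps0 C x.2) = c)].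

Definition is_theta (K : pzRingType) (A : gring K) (C : gcoring K)
  (theta : bcar (ccomp C 1) -> gcar A) : Prop :=
  [/\ (forall c c', theta (c + c') = theta c + theta c'),
      (forall k c, theta (blact k c) = geta A k * theta c) &
      (forall k c, theta (bract c k) = theta c * geta A k)] /\
  [/\ injective theta,
      (forall c, ghom A 1 (theta c)) &
      (forall a, ghom A 1 a -> exists c, theta c = a)].

Definition almost_koszul (K : pzRingType) (A : gring K) (C : gcoring K)
  (theta : bcar (ccomp C 1) -> gcar A) : Prop :=
  [/\ is_conn_graded_ring A, is_conn_graded_coring C, is_theta theta &
      (forall c : bcar (ccomp C 2),
         \sum_(x <- cdelta C (erefl (1 + 1)%N) c) theta x.1 * theta x.2 = 0)].

Arguments almost_koszul {K} A C theta.

(* The Koszul complex K^l: K_{-1} = K, K_n = A (x)_K C_n. *)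
Definition kdiff0 (K : pzRingType) (A : gring K) (C : gcoring K)
  (s : seq (gcar A * bcar (ccomp C 0))) : K :=
  \sum_(x <- s) gaug A (x.1 * geta A (ceps0 C x.2)).

Definition kdiff (K : Type) (A : gring K) (C : gcoring K)
  (theta : bcar (ccomp C 1) -> gcar A) (n : nat)
  (s : seq (gcar A * bcar (ccomp C n.+1))) : seq (gcar A * bcar (ccomp C n)) :=
  flatten [seq [seq (x.1 * theta y.1, y.2) | y <- cdelta C (erefl (1 + n)%N) x.2]
          | x <- s].

Definition koszul (K : pzRingType) (A : gring K) (C : gcoring K)
  (theta : bcar (ccomp C 1) -> gcar A) : Prop :=
  almost_koszul A C theta /\
  [/\
      (forall k : K, exists s : seq (gcar A * bcar (ccomp C 0)), kdiff0 s = k),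
      (forall s : seq (gcar A * bcar (ccomp C 0)), kdiff0 s = 0 ->
         exists t, tensor_eq (M := gring_bimod A) (kdiff theta t) s) &
      (forall n (s : seq (gcar A * bcar (ccomp C n.+1))),
         tensor_eq (M := gring_bimod A) (kdiff theta s) [::] ->
         exists t, tensor_eq (M := gring_bimod A) (kdiff theta t) s)].

Arguments koszul {K} A C theta.

Definition bimod_sum (R S : Type) (V : bimod R) (W : bimod S) : bimod (R * S) :=
  BiMod ((bcar V * bcar W)%type : zmodType)
    (fun k x => (blact k.1 x.1, blact k.2 x.2))
    (fun x k => (bract x.1 k.1, bract x.2 k.2)).

Definition gring_prod (R S : Type) (A : gring R) (B : gring S) : gring (R * S) :=
  GRing_ ((gcar A * gcar B)%type : pzRingType)
    (fun k => (geta A k.1, geta B k.2))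
    (fun n x => ghom A n x.1 /\ ghom B n x.2)
    (fun x => (gaug A x.1, gaug B x.2)).

Definition gcoring_sum (R S : Type) (C : gcoring R) (D : gcoring S) : gcoring (R * S) :=
  GCoring (fun n => bimod_sum (ccomp C n) (ccomp D n))
    (fun n p q H x =>
       [seq ((y.1, 0), (y.2, 0)) | y <- cdelta C H x.1] ++
       [seq ((0, y.1), (0, y.2)) | y <- cdelta D H x.2])
    (fun x => (ceps0 C x.1, ceps0 D x.2)).

Definition theta_prod (R S : Type) (A : gring R) (B : gring S)
  (C : gcoring R) (D : gcoring S)
  (t1 : bcar (ccomp C 1) -> gcar A) (t2 : bcar (ccomp D 1) -> gcar B)
  : bcar (ccomp (gcoring_sum C D) 1) -> gcar (gring_prod A B) :=
  fun x => (t1 x.1, t2 x.2).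

(* Main.v *)
Require Import Defs.
From mathcomp Require Import all_boot all_algebra.
Set Implicit Arguments.
Unset Strict Implicit.
Unset Printing Implicit Defensive.
Import GRing.Theory.
Local Open Scope ring_scope.


Lemma dbl0 (M : zmodType) (x : M) : x = x + x -> x = 0.
Proof. by move=> h; apply/eqP; rewrite -(addrI x (etrans (addr0 x) h)). Qed.

Section BM.
Variables (K : pzRingType) (M : bimod K) (HM : is_bimod M).
Lemma la_x0 k : blact k (0 : bcar M) = 0.
Proof. case: HM => [[h _ _ _] _]; apply: dbl0; by rewrite -h addr0. Qed.
Lemma la_0x (x : bcar M) : blact 0 x = 0.
Proof. case: HM => [[_ h _ _] _]; apply: dbl0; by rewrite -h addr0. Qed.
Lemma ra_x0 k : bract (0 : bcar M) k = 0.
Proof. case: HM => [_ [h _ _ _ _]]; apply: dbl0; by rewrite -h addr0. Qed.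
Lemma ra_0x (x : bcar M) : bract x 0 = 0.
Proof. case: HM => [_ [_ h _ _ _]]; apply: dbl0; by rewrite -h addr0. Qed.
Lemma ra_x1 (x : bcar M) : bract x 1 = x.
Proof. by case: HM => [_ [_ _ _ h _]]. Qed.
End BM.

Lemma sum_fst (M N : zmodType) (I : Type) (l : seq I) (F : I -> M * N) :
  (\sum_(x <- l) F x).1 = \sum_(x <- l) (F x).1.
Proof. elim: l => [|x l IH]; by rewrite ?big_nil ?big_cons //= IH. Qed.
Lemma sum_snd (M N : zmodType) (I : Type) (l : seq I) (F : I -> M * N) :
  (\sum_(x <- l) F x).2 = \sum_(x <- l) (F x).2.
Proof. elim: l => [|x l IH]; by rewrite ?big_nil ?big_cons //= IH. Qed.
Lemma sum_pair (M N : zmodType) (I : Type) (l : seq I) (F : I -> M * N) :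
  \sum_(x <- l) F x = (\sum_(x <- l) (F x).1, \sum_(x <- l) (F x).2).
Proof. by rewrite -sum_fst -sum_snd; case: (\sum_(x <- l) F x). Qed.

Lemma sum_flat (I J T : Type) (M : zmodType) (l : seq I) (L : I -> seq J)
  (F : I -> J -> T) (phi : T -> M) :
  \sum_(x <- flatten [seq [seq F x y | y <- L x] | x <- l]) phi x
  = \sum_(x <- l) \sum_(y <- L x) phi (F x y).
Proof. by rewrite big_flatten big_map; apply: eq_bigr => x _; rewrite big_map. Qed.

Lemma addpE (M N : zmodType) (a c : M) (b d : N) :
  (a, b) + (c, d) = (a + c, b + d) :> M * N.
Proof. by []. Qed.

Lemma mulpE (M N : pzRingType) (a c : M) (b d : N) :
  (a, b) * (c, d) = (a * c, b * d) :> M * N.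
Proof. by []. Qed.


Lemma geta0 (K : pzRingType) (A : gring K) : is_conn_graded_ring A -> geta A 0 = 0.
Proof. case=> [[h _ _] _]; apply: dbl0; by rewrite -h addr0. Qed.
Lemma gaug0 (K : pzRingType) (A : gring K) : is_conn_graded_ring A -> gaug A 0 = 0.
Proof. case=> [_ [_ [_ [_ _ [h _ _]]]]]; apply: dbl0; by rewrite -h addr0. Qed.

Lemma prod_ring (R S : pzRingType) (A : gring R) (B : gring S) :
  is_conn_graded_ring A -> is_conn_graded_ring B -> is_conn_graded_ring (gring_prod A B).
Proof.
move=> [[ea1 em1 e11] [[h01 hB1] [[hd1 hu1 hm1] [hc1 ei1 [ga1 ge1 gh1]]]]].
move=> [[ea2 em2 e12] [[h02 hB2] [[hd2 hu2 hm2] [hc2 ei2 [ga2 ge2 gh2]]]]].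
split; [split|split; [split|split; [split|split]]].
- by move=> k k' /=; rewrite ea1 ea2.
- by move=> k k' /=; rewrite em1 em2.
- by rewrite /= e11 e12.
- by move=> n /=; split.
- by move=> n a b /= [? ?] [? ?]; split; [apply: hB1|apply: hB2].
- move=> [a1 a2]; have [N1 [f1 [Hf1 ->]]] := hd1 a1; have [N2 [f2 [Hf2 ->]]] := hd2 a2.
  exists (N1 + N2)%N, (fun i => (if (i < N1)%N then f1 i else 0, if (i < N2)%N then f2 i else 0)).
  split.
    by move=> i /=; split; case: ifP.
  rewrite sum_pair /=; congr pair.
    by rewrite (big_ord_widen _ _ (leq_addr N2 N1)) big_mkcond.
  by rewrite (big_ord_widen _ _ (leq_addl N1 N2)) big_mkcond.
- move=> N f Hf; rewrite sum_pair => -[E1 E2] i Hi.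
  have := hu1 N (fun i => (f i).1) (fun i => (Hf i).1) E1 i Hi.
  have := hu2 N (fun i => (f i).2) (fun i => (Hf i).2) E2 i Hi.
  by case: (f i) => /= ? ? -> ->.
- by move=> p q a b /= [? ?] [? ?]; split; [apply: hm1|apply: hm2].
- move=> [a1 a2] /=; split.
    by move=> [/hc1 [k1 ->] /hc2 [k2 ->]]; exists (k1, k2).
  by move=> [[k1 k2] [-> ->]]; split; [apply/hc1; exists k1|apply/hc2; exists k2].
- by move=> [k1 k2] [k1' k2'] [/ei1 -> /ei2 ->].
- split.
  + by move=> [a1 a2] [b1 b2] /=; rewrite ga1 ga2.
  + by move=> [k1 k2] /=; rewrite ge1 ge2.
  + by move=> n [a1 a2] Hn [h1 h2] /=; rewrite (gh1 n a1) ?(gh2 n a2).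
Qed.


Lemma theta0 (K : pzRingType) (A : gring K) (C : gcoring K) t :
  @is_theta K A C t -> t 0 = 0.
Proof. case=> [[h _ _] _]; apply: dbl0; by rewrite -h addr0. Qed.

Lemma prod_theta (R S : pzRingType) (A : gring R) (C : gcoring R) t1
   (B : gring S) (D : gcoring S) t2 :
  @is_theta R A C t1 -> @is_theta S B D t2 ->
  is_theta (theta_prod t1 t2).
Proof.
move=> [[a1 l1 r1] [i1 h1 s1]] [[a2 l2 r2] [i2 h2 s2]].
split; split.
- by move=> [c1 c2] [d1 d2]; rewrite /theta_prod /= a1 a2.
- by move=> [k1 k2] [c1 c2]; rewrite /theta_prod /= l1 l2.
- by move=> [k1 k2] [c1 c2]; rewrite /theta_prod /= r1 r2.
- by move=> [c1 c2] [d1 d2] [/i1 -> /i2 ->].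
- by move=> [c1 c2]; split; [apply: h1|apply: h2].
- move=> [a b] [/s1 [c1 E1] /s2 [c2 E2]]; exists (c1, c2).
  by rewrite /theta_prod /= E1 E2.
Qed.

Lemma prod_mu (R S : pzRingType) (A : gring R) (C : gcoring R) t1
   (B : gring S) (D : gcoring S) t2 :
  almost_koszul A C t1 -> almost_koszul B D t2 ->
  forall c : bcar (ccomp (gcoring_sum C D) 2),
  \sum_(x <- cdelta (gcoring_sum C D) (erefl (1 + 1)%N) c)
     theta_prod t1 t2 x.1 * theta_prod t1 t2 x.2 = 0.
Proof.
move=> [_ _ T1 M1] [_ _ T2 M2] [c1 c2] /=.
rewrite big_cat !big_map /theta_prod /= !(theta0 T1) !(theta0 T2).
rewrite !sum_pair /=.
rewrite M1 M2 !big1 => [|*|*]; rewrite ?mulr0 //.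
by rewrite addr0.
Qed.


Lemma gring_bimodP (K : pzRingType) (A : gring K) :
  is_conn_graded_ring A -> is_bimod (gring_bimod A).
Proof.
move=> [[ea em e1] _].
split; split => /=.
- by move=> k x y; rewrite mulrDr.
- by move=> k k' x; rewrite ea mulrDl.
- by move=> k k' x; rewrite em mulrA.
- by move=> x; rewrite e1 mul1r.
- by move=> k x y; rewrite mulrDl.
- by move=> k k' x; rewrite ea mulrDr.
- by move=> k k' x; rewrite em mulrA.
- by move=> x; rewrite e1 mulr1.
- by move=> k k' x; rewrite mulrA.
Qed.

Lemma bal_f0 (K : Type) (M N G : zmodType) (ra : M -> K -> M) (la : K -> N -> N) (f : M -> N -> G) :
  balanced ra la f -> forall n, f 0 n = 0.
Proof. move=> [h _ _] n; apply: dbl0; by rewrite -h addr0. Qed.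
Lemma bal_0f (K : Type) (M N G : zmodType) (ra : M -> K -> M) (la : K -> N -> N) (f : M -> N -> G) :
  balanced ra la f -> forall m, f m 0 = 0.
Proof. move=> [_ h _] n; apply: dbl0; by rewrite -h addr0. Qed.

Section BalSum.
Variables (R S : pzRingType) (M1 N1 : bimod R) (M2 N2 : bimod S).
Hypotheses (HM1 : is_bimod M1) (HN1 : is_bimod N1) (HM2 : is_bimod M2) (HN2 : is_bimod N2).
Variables (G : zmodType) (f : bcar (bimod_sum M1 M2) -> bcar (bimod_sum N1 N2) -> G).
Hypothesis Hf : balanced (@bract _ (bimod_sum M1 M2)) (@blact _ (bimod_sum N1 N2)) f.

Lemma bal_l : balanced (@bract R M1) (@blact R N1) (fun m n => f (m, 0) (n, 0)).
Proof.
case: Hf => h1 h2 h3; split.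
- by move=> m m' n; rewrite -h1 addpE addr0.
- by move=> m n n'; rewrite -h2 addpE addr0.
- move=> m k n.
  have := h3 (m, 0) (k, 0) (n, 0); by rewrite /= (ra_x0 HM2) (la_x0 HN2).
Qed.

Lemma bal_r : balanced (@bract S M2) (@blact S N2) (fun m n => f (0, m) (0, n)).
Proof.
case: Hf => h1 h2 h3; split.
- by move=> m m' n; rewrite -h1 addpE addr0.
- by move=> m n n'; rewrite -h2 addpE addr0.
- move=> m k n.
  have := h3 (0, m) (0, k) (0, n); by rewrite /= (ra_x0 HM1) (la_x0 HN1).
Qed.

Lemma bal_split x y : f x y = f (x.1, 0) (y.1, 0) + f (0, x.2) (0, y.2).
Proof.
case: Hf => h1 h2 h3.
case: x y => [m1 m2] [n1 n2] /=.
have -> : ((m1, m2) : bcar (bimod_sum M1 M2)) = (m1, 0) + (0, m2) by rewrite addpE addr0 add0r.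
have -> : ((n1, n2) : bcar (bimod_sum N1 N2)) = (n1, 0) + (0, n2) by rewrite addpE addr0 add0r.
rewrite !h1 !h2.
have -> : f (m1, 0) (0, n2) = 0.
  have := h3 (m1, 0) (1, 0) (0, n2).
  by rewrite /= (ra_x1 HM1) (ra_x0 HM2) (la_x0 HN1) (la_0x HN2) => ->; apply: (bal_0f Hf).
have -> : f (0, m2) (n1, 0) = 0.
  have := h3 (0, m2) (0, 1) (n1, 0).
  by rewrite /= (ra_x1 HM2) (ra_x0 HM1) (la_x0 HN2) (la_0x HN1) => ->; apply: (bal_0f Hf).
by rewrite addr0 add0r.
Qed.

End BalSum.

Lemma bal_liftl (R S : pzRingType) (M1 N1 : bimod R) (M2 N2 : bimod S)
  (G : zmodType) (g : bcar M1 -> bcar N1 -> G) :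
  balanced (@bract R M1) (@blact R N1) g ->
  balanced (@bract _ (bimod_sum M1 M2)) (@blact _ (bimod_sum N1 N2))
    (fun x y => g x.1 y.1).
Proof. case=> h1 h2 h3; split => /=; [by move=> *; rewrite h1|by move=> *; rewrite h2|by move=> *; rewrite h3]. Qed.

Lemma bal_liftr (R S : pzRingType) (M1 N1 : bimod R) (M2 N2 : bimod S)
  (G : zmodType) (g : bcar M2 -> bcar N2 -> G) :
  balanced (@bract S M2) (@blact S N2) g ->
  balanced (@bract _ (bimod_sum M1 M2)) (@blact _ (bimod_sum N1 N2))
    (fun x y => g x.2 y.2).
Proof. case=> h1 h2 h3; split => /=; [by move=> *; rewrite h1|by move=> *; rewrite h2|by move=> *; rewrite h3]. Qed.


Lemma bimod_sumP (R S : pzRingType) (M : bimod R) (N : bimod S) :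
  is_bimod M -> is_bimod N -> is_bimod (bimod_sum M N).
Proof.
move=> [[a1 a2 a3 a4] [b1 b2 b3 b4 b5]] [[c1 c2 c3 c4] [d1 d2 d3 d4 d5]].
split; split => /=.
- by move=> k [x1 x2] [y1 y2]; rewrite !addpE a1 c1.
- by move=> k k' [x1 x2]; rewrite !addpE a2 c2.
- by move=> k k' [x1 x2]; rewrite a3 c3.
- by move=> [x1 x2]; rewrite a4 c4.
- by move=> k [x1 x2] [y1 y2]; rewrite !addpE b1 d1.
- by move=> k k' [x1 x2]; rewrite !addpE b2 d2.
- by move=> k k' [x1 x2]; rewrite b3 d3.
- by move=> [x1 x2]; rewrite b4 d4.
- by move=> k k' [x1 x2]; rewrite b5 d5.
Qed.

Section Bal3.
Variables (R S : pzRingType) (M1 N1 P1 : bimod R) (M2 N2 P2 : bimod S).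
Hypotheses (HM1 : is_bimod M1) (HN1 : is_bimod N1) (HP1 : is_bimod P1).
Hypotheses (HM2 : is_bimod M2) (HN2 : is_bimod N2) (HP2 : is_bimod P2).
Variables (G : zmodType)
  (f : bcar (bimod_sum M1 M2) -> bcar (bimod_sum N1 N2) -> bcar (bimod_sum P1 P2) -> G).
Hypothesis Hf : balanced3 (@bract _ (bimod_sum M1 M2)) (@blact _ (bimod_sum N1 N2))
   (@bract _ (bimod_sum N1 N2)) (@blact _ (bimod_sum P1 P2)) f.

Lemma bal3_l : balanced3 (@bract R M1) (@blact R N1) (@bract R N1) (@blact R P1)
  (fun a b c => f (a, 0) (b, 0) (c, 0)).
Proof.
case: Hf => h1 h2 h3 h4 h5; split.
- by move=> *; rewrite -h1 addpE addr0.
- by move=> *; rewrite -h2 addpE addr0.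
- by move=> *; rewrite -h3 addpE addr0.
- move=> m k n p; have := h4 (m, 0) (k, 0) (n, 0) (p, 0); by rewrite /= (ra_x0 HM2) (la_x0 HN2).
- move=> m n k p; have := h5 (m, 0) (n, 0) (k, 0) (p, 0); by rewrite /= (ra_x0 HN2) (la_x0 HP2).
Qed.

Lemma bal3_r : balanced3 (@bract S M2) (@blact S N2) (@bract S N2) (@blact S P2)
  (fun a b c => f (0, a) (0, b) (0, c)).
Proof.
case: Hf => h1 h2 h3 h4 h5; split.
- by move=> *; rewrite -h1 addpE addr0.
- by move=> *; rewrite -h2 addpE addr0.
- by move=> *; rewrite -h3 addpE addr0.
- move=> m k n p; have := h4 (0, m) (0, k) (0, n) (0, p); by rewrite /= (ra_x0 HM1) (la_x0 HN1).
- move=> m n k p; have := h5 (0, m) (0, n) (0, k) (0, p); by rewrite /= (ra_x0 HN1) (la_x0 HP1).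
Qed.

Lemma bal3_fix1_l u : balanced (@bract R N1) (@blact R P1) (fun b c => f u (b, 0) (c, 0)).
Proof.
case: Hf => h1 h2 h3 h4 h5; split.
- by move=> *; rewrite -h2 addpE addr0.
- by move=> *; rewrite -h3 addpE addr0.
- move=> n k p; have := h5 u (n, 0) (k, 0) (p, 0); by rewrite /= (ra_x0 HN2) (la_x0 HP2).
Qed.

Lemma bal3_fix1_r u : balanced (@bract S N2) (@blact S P2) (fun b c => f u (0, b) (0, c)).
Proof.
case: Hf => h1 h2 h3 h4 h5; split.
- by move=> *; rewrite -h2 addpE addr0.
- by move=> *; rewrite -h3 addpE addr0.
- move=> n k p; have := h5 u (0, n) (0, k) (0, p); by rewrite /= (ra_x0 HN1) (la_x0 HP1).
Qed.

Lemma bal3_fix3_l u : balanced (@bract R M1) (@blact R N1) (fun a b => f (a, 0) (b, 0) u).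
Proof.
case: Hf => h1 h2 h3 h4 h5; split.
- by move=> *; rewrite -h1 addpE addr0.
- by move=> *; rewrite -h2 addpE addr0.
- move=> m k n; have := h4 (m, 0) (k, 0) (n, 0) u; by rewrite /= (ra_x0 HM2) (la_x0 HN2).
Qed.

Lemma bal3_fix3_r u : balanced (@bract S M2) (@blact S N2) (fun a b => f (0, a) (0, b) u).
Proof.
case: Hf => h1 h2 h3 h4 h5; split.
- by move=> *; rewrite -h1 addpE addr0.
- by move=> *; rewrite -h2 addpE addr0.
- move=> m k n; have := h4 (0, m) (0, k) (0, n) u; by rewrite /= (ra_x0 HM1) (la_x0 HN1).
Qed.
End Bal3.

Definition mix (R S : Type) (M1 N1 : bimod R) (M2 N2 : bimod S)
  (l1 : seq (bcar M1 * bcar N1)) (l2 : seq (bcar M2 * bcar N2))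
  : seq (bcar (bimod_sum M1 M2) * bcar (bimod_sum N1 N2)) :=
  [seq ((y.1, 0), (y.2, 0)) | y <- l1] ++ [seq ((0, y.1), (0, y.2)) | y <- l2].

Arguments mix : simpl never.
Arguments tsum : simpl never.

Lemma cdelta_sumE (R S : Type) (C : gcoring R) (D : gcoring S) n p q (H : (p + q)%N = n) c :
  cdelta (gcoring_sum C D) H c = mix (cdelta C H c.1) (cdelta D H c.2).
Proof. by []. Qed.

Lemma tsum_mix (R S : Type) (M1 N1 : bimod R) (M2 N2 : bimod S) (G : zmodType)
  (f : bcar (bimod_sum M1 M2) -> bcar (bimod_sum N1 N2) -> G) l1 l2 :
  tsum f (mix l1 l2) = tsum (fun a b => f (a, 0) (b, 0)) l1 + tsum (fun a b => f (0, a) (0, b)) l2.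
Proof. by rewrite /tsum /mix big_cat !big_map. Qed.

Lemma delta0 (K : pzRingType) (C : gcoring K) : is_conn_graded_coring C ->
  forall n p q (H : (p + q)%N = n) (G : zmodType) g,
  balanced (@bract _ (ccomp C p)) (@blact _ (ccomp C q)) g ->
  tsum (G := G) g (cdelta C H 0) = 0.
Proof.
move=> [_ [[Hadd _ _ _] _]] n p q H G g Hg.
have E := Hadd n p q H 0 0 G g Hg; rewrite addr0 in E.
by apply: dbl0; rewrite {1}E /tsum big_cat.
Qed.

Lemma tsum_cat (M N G : zmodType) (f : M -> N -> G) l l' :
  tsum f (l ++ l') = tsum f l + tsum f l'.
Proof. by rewrite /tsum big_cat. Qed.

Lemma tsum_mix_la (R S : pzRingType) (M1 N1 : bimod R) (M2 N2 : bimod S) (G : zmodType)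
  (HM1 : is_bimod M1) (HM2 : is_bimod M2)
  (f : bcar (bimod_sum M1 M2) -> bcar (bimod_sum N1 N2) -> G) l1 l2 k :
  tsum f [seq (blact k x.1, x.2) | x <- mix l1 l2] =
  tsum (fun a b => f (a, 0) (b, 0)) [seq (blact k.1 x.1, x.2) | x <- l1] +
  tsum (fun a b => f (0, a) (0, b)) [seq (blact k.2 x.1, x.2) | x <- l2].
Proof.
rewrite /tsum /mix map_cat big_cat !big_map.
by congr (_ + _); apply: eq_bigr => y _ /=; rewrite ?(la_x0 HM1) ?(la_x0 HM2).
Qed.

Lemma tsum_mix_ra (R S : pzRingType) (M1 N1 : bimod R) (M2 N2 : bimod S) (G : zmodType)
  (HN1 : is_bimod N1) (HN2 : is_bimod N2)
  (f : bcar (bimod_sum M1 M2) -> bcar (bimod_sum N1 N2) -> G) l1 l2 k :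
  tsum f [seq (x.1, bract x.2 k) | x <- mix l1 l2] =
  tsum (fun a b => f (a, 0) (b, 0)) [seq (x.1, bract x.2 k.1) | x <- l1] +
  tsum (fun a b => f (0, a) (0, b)) [seq (x.1, bract x.2 k.2) | x <- l2].
Proof.
rewrite /tsum /mix map_cat big_cat !big_map.
by congr (_ + _); apply: eq_bigr => y _ /=; rewrite ?(ra_x0 HN1) ?(ra_x0 HN2).
Qed.

Lemma delta0' (K : pzRingType) (C : gcoring K) : is_conn_graded_coring C ->
  forall n p q (H : (p + q)%N = n) (G : zmodType) g,
  balanced (@bract _ (ccomp C p)) (@blact _ (ccomp C q)) g ->
  \sum_(x <- cdelta C H 0) (g x.1 x.2 : G) = 0.
Proof. move=> HC n p q H G g Hg; exact: (delta0 HC H Hg). Qed.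

Lemma inner_l (X Y T : Type) (G : zmodType) (l1 : seq X) (l2 : seq Y)
  (F1 : X -> T) (F2 : Y -> T) (h : T -> G) :
  \sum_(y <- l2) h (F2 y) = 0 ->
  \sum_(y <- [seq F1 y | y <- l1] ++ [seq F2 y | y <- l2]) h y = \sum_(y <- l1) h (F1 y).
Proof. by move=> E; rewrite big_cat !big_map E; apply: addr0. Qed.

Lemma inner_r (X Y T : Type) (G : zmodType) (l1 : seq X) (l2 : seq Y)
  (F1 : X -> T) (F2 : Y -> T) (h : T -> G) :
  \sum_(y <- l1) h (F1 y) = 0 ->
  \sum_(y <- [seq F1 y | y <- l1] ++ [seq F2 y | y <- l2]) h y = \sum_(y <- l2) h (F2 y).
Proof. by move=> E; rewrite big_cat !big_map E; apply: add0r. Qed.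


Lemma prod_coring (R S : pzRingType) (C : gcoring R) (D : gcoring S) :
  is_conn_graded_coring C -> is_conn_graded_coring D ->
  is_conn_graded_coring (gcoring_sum C D).
Proof.
move=> HC HD.
have HC' := HC; have HD' := HD.
move: HC' HD' => [BC [[adC laC raC coC] [[e1C e2C e3C e4C] epC peC]]]
                 [BD [[adD laD raD coD] [[e1D e2D e3D e4D] epD peD]]].
have B n : is_bimod (ccomp (gcoring_sum C D) n) by apply: bimod_sumP.
split => //; split; [split|split].
- move=> n p q H [c1 c2] [c1' c2'] G f Hf.
  rewrite /tensor_eq /teq in Hf *. rewrite !cdelta_sumE addpE /= tsum_mix tsum_cat !tsum_mix.
  rewrite (adC _ _ _ H c1 c1' _ _ (bal_l (BD p) (BD q) Hf)).
  rewrite (adD _ _ _ H c2 c2' _ _ (bal_r (BC p) (BC q) Hf)).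
  by rewrite !tsum_cat addrACA.
- move=> n p q H k c G f Hf.
  rewrite /tensor_eq /teq in Hf *.
  rewrite !cdelta_sumE (tsum_mix_la (BC p) (BD p)) tsum_mix.
  rewrite (laC _ _ _ H _ _ _ _ (bal_l (BD p) (BD q) Hf)).
  by rewrite (laD _ _ _ H _ _ _ _ (bal_r (BC p) (BC q) Hf)).
- move=> n p q H k c G f Hf.
  rewrite /tensor_eq /teq in Hf *.
  rewrite !cdelta_sumE (tsum_mix_ra (BC q) (BD q)) tsum_mix.
  rewrite (raC _ _ _ H _ _ _ _ (bal_l (BD p) (BD q) Hf)).
  by rewrite (raD _ _ _ H _ _ _ _ (bal_r (BC p) (BC q) Hf)).
- move=> p q r n H c G f Hf.
  have E1 := coC p q r n H c.1 G _ (bal3_l (BD p) (BD q) (BD r) Hf).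
  have E2 := coD p q r n H c.2 G _ (bal3_r (BC p) (BC q) (BC r) Hf).
  rewrite /tensor3_eq !sum_flat /= in E1 E2.
  rewrite !sum_flat !cdelta_sumE /mix !big_cat !big_map /=.

  rewrite [X in X + _ = _](eq_bigr (fun j : bcar (ccomp C (p + q)) * bcar (ccomp C r) =>
       \sum_(y <- cdelta C erefl j.1) f (y.1, 0) (y.2, 0) (j.2, 0))); last first.
    move=> j _; apply: inner_l; exact: (delta0' HD erefl (bal3_fix3_r (BC p) (BC q) Hf (j.2, 0))).
  rewrite [X in _ + X = _](eq_bigr (fun j : bcar (ccomp D (p + q)) * bcar (ccomp D r) =>
       \sum_(y <- cdelta D erefl j.1) f (0, y.1) (0, y.2) (0, j.2))); last first.
    move=> j _; apply: inner_r; exact: (delta0' HC erefl (bal3_fix3_l (BD p) (BD q) Hf (0, j.2))).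
  rewrite [X in _ = X + _](eq_bigr (fun j : bcar (ccomp C p) * bcar (ccomp C (q + r)) =>
       \sum_(y <- cdelta C erefl j.2) f (j.1, 0) (y.1, 0) (y.2, 0))); last first.
    move=> j _; apply: inner_l; exact: (delta0' HD erefl (bal3_fix1_r (BC q) (BC r) Hf (j.1, 0))).
  rewrite [X in _ = _ + X](eq_bigr (fun j : bcar (ccomp D p) * bcar (ccomp D (q + r)) =>
       \sum_(y <- cdelta D erefl j.2) f (0, j.1) (0, y.1) (0, y.2))); last first.
    move=> j _; apply: inner_r; exact: (delta0' HC erefl (bal3_fix1_l (BD q) (BD r) Hf (0, j.1))).
  by rewrite /= E1 E2.
- split.
  + by move=> [c1 c2] [d1 d2]; rewrite addpE /= e1C e1D.
  + by move=> [k1 k2] [c1 c2] /=; rewrite e2C e2D.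
  + by move=> [k1 k2] [c1 c2] /=; rewrite e3C e3D.
  + case: e4C => g1 h1 h1'; case: e4D => g2 h2 h2'.
    exists (fun k => (g1 k.1, g2 k.2)) => [[c1 c2]|[k1 k2]] /=.
      by rewrite h1 h2.
    by rewrite h1' h2'.
- move=> n [c1 c2]; rewrite cdelta_sumE /mix big_cat !big_map !sum_pair /=.
  rewrite (la_x0 (BD n)) (la_x0 (BC n)) !big1_eq epC epD.
  by rewrite addpE addr0 add0r.
- move=> n [c1 c2]; rewrite cdelta_sumE /mix big_cat !big_map !sum_pair /=.
  rewrite (ra_x0 (BD n)) (ra_x0 (BC n)) !big1_eq peC peD.
  by rewrite addpE addr0 add0r.
Qed.


Lemma kdiff_cat (K : Type) (A : gring K) (C : gcoring K) th n (s s' : seq (gcar A * bcar (ccomp C n.+1))) :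
  kdiff th (s ++ s') = kdiff th s ++ kdiff th s'.
Proof. by rewrite /kdiff map_cat flatten_cat. Qed.

Section Kos.
Variables (R S : pzRingType) (A : gring R) (C : gcoring R) (t1 : bcar (ccomp C 1) -> gcar A)
  (B : gring S) (D : gcoring S) (t2 : bcar (ccomp D 1) -> gcar B).
Hypotheses (HA : almost_koszul A C t1) (HB : almost_koszul B D t2).

Let RA : is_conn_graded_ring A. Proof. by case: HA. Qed.
Let RB : is_conn_graded_ring B. Proof. by case: HB. Qed.
Let CC : is_conn_graded_coring C. Proof. by case: HA. Qed.
Let CD : is_conn_graded_coring D. Proof. by case: HB. Qed.
Let TA : is_theta t1. Proof. by case: HA. Qed.
Let TB : is_theta t2. Proof. by case: HB. Qed.
Let BA : is_bimod (gring_bimod A). Proof. exact: gring_bimodP. Qed.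
Let BB : is_bimod (gring_bimod B). Proof. exact: gring_bimodP. Qed.
Let BC n : is_bimod (ccomp C n). Proof. by case: CC. Qed.
Let BD n : is_bimod (ccomp D n). Proof. by case: CD. Qed.

Local Notation P := (gring_prod A B).
Local Notation Q := (gcoring_sum C D).
Local Notation th := (theta_prod t1 t2).

Definition liftA n (s : seq (gcar A * bcar (ccomp C n))) : seq (gcar P * bcar (ccomp Q n)) :=
  [seq ((x.1, 0), (x.2, 0)) | x <- s].
Definition liftB n (s : seq (gcar B * bcar (ccomp D n))) : seq (gcar P * bcar (ccomp Q n)) :=
  [seq ((0, x.1), (0, x.2)) | x <- s].
Definition projA n (s : seq (gcar P * bcar (ccomp Q n))) : seq (gcar A * bcar (ccomp C n)) :=
  [seq (x.1.1, x.2.1) | x <- s].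
Definition projB n (s : seq (gcar P * bcar (ccomp Q n))) : seq (gcar B * bcar (ccomp D n)) :=
  [seq (x.1.2, x.2.2) | x <- s].

Lemma balA n (G : zmodType) (f : gcar P -> bcar (ccomp Q n) -> G) :
  balanced (@bract _ (gring_bimod P)) (@blact _ (ccomp Q n)) f ->
  balanced (@bract _ (gring_bimod A)) (@blact _ (ccomp C n)) (fun a c => f (a, 0) (c, 0)).
Proof. exact: (@bal_l _ _ (gring_bimod A) (ccomp C n) (gring_bimod B) (ccomp D n) BB (BD n)). Qed.

Lemma balB n (G : zmodType) (f : gcar P -> bcar (ccomp Q n) -> G) :
  balanced (@bract _ (gring_bimod P)) (@blact _ (ccomp Q n)) f ->
  balanced (@bract _ (gring_bimod B)) (@blact _ (ccomp D n)) (fun a c => f (0, a) (0, c)).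
Proof. exact: (@bal_r _ _ (gring_bimod A) (ccomp C n) (gring_bimod B) (ccomp D n) BA (BC n)). Qed.

Lemma balsplit n (G : zmodType) (f : gcar P -> bcar (ccomp Q n) -> G) :
  balanced (@bract _ (gring_bimod P)) (@blact _ (ccomp Q n)) f ->
  forall x y, f x y = f (x.1, 0) (y.1, 0) + f (0, x.2) (0, y.2).
Proof. exact: (@bal_split _ _ (gring_bimod A) (ccomp C n) (gring_bimod B) (ccomp D n) BA (BC n) BB (BD n)). Qed.

Lemma balliftA n (G : zmodType) (g : gcar A -> bcar (ccomp C n) -> G) :
  balanced (@bract _ (gring_bimod A)) (@blact _ (ccomp C n)) g ->
  balanced (@bract _ (gring_bimod P)) (@blact _ (ccomp Q n)) (fun x y => g x.1 y.1).
Proof. exact: (@bal_liftl _ _ (gring_bimod A) (ccomp C n) (gring_bimod B) (ccomp D n)). Qed.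

Lemma balliftB n (G : zmodType) (g : gcar B -> bcar (ccomp D n) -> G) :
  balanced (@bract _ (gring_bimod B)) (@blact _ (ccomp D n)) g ->
  balanced (@bract _ (gring_bimod P)) (@blact _ (ccomp Q n)) (fun x y => g x.2 y.2).
Proof. exact: (@bal_liftr _ _ (gring_bimod A) (ccomp C n) (gring_bimod B) (ccomp D n)). Qed.


Lemma kd n (G : zmodType) (f : gcar P -> bcar (ccomp Q n) -> G) (s : seq (gcar P * bcar (ccomp Q n.+1))) :
  tsum f (kdiff th s) = tsum (fun a c => f (a, 0) (c, 0)) (kdiff t1 (projA s))
                      + tsum (fun b d => f (0, b) (0, d)) (kdiff t2 (projB s)).
Proof.
rewrite /kdiff /tsum !sum_flat /projA /projB !big_map -big_split.
apply: eq_bigr => -[[a b] c] _; rewrite cdelta_sumE /mix big_cat !big_map /=.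
rewrite /theta_prod /= (theta0 TA) (theta0 TB).
congr (_ + _); apply: eq_bigr => y _; by rewrite mulpE ?mulr0.
Qed.

Lemma ts n (G : zmodType) (f : gcar P -> bcar (ccomp Q n) -> G) (s : seq (gcar P * bcar (ccomp Q n))) :
  balanced (@bract _ (gring_bimod P)) (@blact _ (ccomp Q n)) f ->
  tsum f s = tsum (fun a c => f (a, 0) (c, 0)) (projA s)
           + tsum (fun b d => f (0, b) (0, d)) (projB s).
Proof.
move=> Hf; rewrite /tsum /projA /projB !big_map -big_split.
by apply: eq_bigr => x _; rewrite (balsplit Hf).
Qed.

Lemma projA_liftA n s : projA (liftA (n := n) s) = s.
Proof. by rewrite /projA /liftA -map_comp map_id_in //; case. Qed.
Lemma projB_liftB n s : projB (liftB (n := n) s) = s.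
Proof. by rewrite /projB /liftB -map_comp map_id_in //; case. Qed.
Lemma projB_liftA n s : projB (liftA (n := n) s) = [seq (0, 0) | _ <- s].
Proof. by rewrite /projB /liftA -map_comp. Qed.
Lemma projA_liftB n s : projA (liftB (n := n) s) = [seq (0, 0) | _ <- s].
Proof. by rewrite /projA /liftB -map_comp. Qed.
Lemma projA_cat n s s' : projA (n := n) (s ++ s') = projA s ++ projA s'.
Proof. exact: map_cat. Qed.
Lemma projB_cat n s s' : projB (n := n) (s ++ s') = projB s ++ projB s'.
Proof. exact: map_cat. Qed.

Lemma kd_zeroA n (G : zmodType) (g : gcar A -> bcar (ccomp C n) -> G) (T : Type) (l : seq T) :
  (forall c, g 0 c = 0) -> tsum g (kdiff t1 [seq ((0 : gcar A), (0 : bcar (ccomp C n.+1))) | _ <- l]) = 0.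
Proof.
move=> H0; rewrite /kdiff /tsum sum_flat big_map big1 // => x _.
by rewrite big1 // => y _ /=; rewrite mul0r H0.
Qed.
Lemma kd_zeroB n (G : zmodType) (g : gcar B -> bcar (ccomp D n) -> G) (T : Type) (l : seq T) :
  (forall c, g 0 c = 0) -> tsum g (kdiff t2 [seq ((0 : gcar B), (0 : bcar (ccomp D n.+1))) | _ <- l]) = 0.
Proof.
move=> H0; rewrite /kdiff /tsum sum_flat big_map big1 // => x _.
by rewrite big1 // => y _ /=; rewrite mul0r H0.
Qed.

Lemma glue n (s : seq (gcar P * bcar (ccomp Q n))) t1' t2' :
  tensor_eq (M := gring_bimod A) (kdiff t1 t1') (projA s) ->
  tensor_eq (M := gring_bimod B) (kdiff t2 t2') (projB s) ->
  tensor_eq (M := gring_bimod P) (kdiff th (liftA t1' ++ liftB t2')) s.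
Proof.
move=> E1 E2 G f Hf.
rewrite (kd f) (ts s Hf) projA_cat projB_cat projA_liftA projB_liftB projA_liftB projB_liftA.
rewrite !kdiff_cat !tsum_cat kd_zeroA ?kd_zeroB; last 2 first.
- by move=> c; apply: (bal_f0 Hf).
- by move=> c; apply: (bal_f0 Hf).
by rewrite addr0 add0r (E1 _ _ (balA Hf)) (E2 _ _ (balB Hf)).
Qed.

Lemma kdiff0_prod (s : seq (gcar P * bcar (ccomp Q 0))) :
  kdiff0 s = (kdiff0 (projA s), kdiff0 (projB s)).
Proof. by rewrite /kdiff0 sum_pair /projA /projB !big_map. Qed.

Lemma kdiff0_cat (K : pzRingType) (A' : gring K) (C' : gcoring K) (s s' : seq (gcar A' * bcar (ccomp C' 0))) :
  kdiff0 (s ++ s') = kdiff0 s + kdiff0 s'.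
Proof. by rewrite /kdiff0 big_cat. Qed.

Lemma kdiff0_zA (T : Type) (l : seq T) :
  kdiff0 [seq ((0 : gcar A), (0 : bcar (ccomp C 0))) | _ <- l] = 0.
Proof. by rewrite /kdiff0 big_map big1 // => x _ /=; rewrite mul0r (gaug0 RA). Qed.
Lemma kdiff0_zB (T : Type) (l : seq T) :
  kdiff0 [seq ((0 : gcar B), (0 : bcar (ccomp D 0))) | _ <- l] = 0.
Proof. by rewrite /kdiff0 big_map big1 // => x _ /=; rewrite mul0r (gaug0 RB). Qed.

Lemma tsum0 (M N G : zmodType) (l : seq (M * N)) : tsum (fun _ _ => (0 : G)) l = 0.
Proof. by rewrite /tsum big1. Qed.

Lemma kos_back : koszul A C t1 -> koszul B D t2 ->
  [/\ (forall k : R * S, exists s : seq (gcar P * bcar (ccomp Q 0)), kdiff0 s = k),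
      (forall s : seq (gcar P * bcar (ccomp Q 0)), kdiff0 s = 0 ->
         exists t, tensor_eq (M := gring_bimod P) (kdiff th t) s) &
      (forall n (s : seq (gcar P * bcar (ccomp Q n.+1))),
         tensor_eq (M := gring_bimod P) (kdiff th s) [::] ->
         exists t, tensor_eq (M := gring_bimod P) (kdiff th t) s)].
Proof.
move=> [_ [a1 a2 a3]] [_ [b1 b2 b3]]; split.
- move=> [r s]; have [s1 E1] := a1 r; have [s2 E2] := b1 s.
  exists (liftA s1 ++ liftB s2).
  rewrite kdiff0_prod projA_cat projB_cat projA_liftA projB_liftB projA_liftB projB_liftA.
  by rewrite !kdiff0_cat kdiff0_zA kdiff0_zB E1 E2 addr0 add0r.
- move=> s E; rewrite kdiff0_prod in E.
  have [t1' Et1] := a2 _ (congr1 fst E); have [t2' Et2] := b2 _ (congr1 snd E).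
  by exists (liftA t1' ++ liftB t2'); apply: glue.
- move=> n s E.
  have E1 : tensor_eq (M := gring_bimod A) (kdiff t1 (projA s)) [::].
    move=> G g Hg; have := E G _ (balliftA Hg); rewrite kd /= (bal_f0 Hg) tsum0 addr0.
    by rewrite /tsum !big_nil.
  have E2 : tensor_eq (M := gring_bimod B) (kdiff t2 (projB s)) [::].
    move=> G g Hg; have := E G _ (balliftB Hg); rewrite kd /= (bal_f0 Hg) tsum0 add0r.
    by rewrite /tsum !big_nil.
  have [t1' Et1] := a3 _ _ E1; have [t2' Et2] := b3 _ _ E2.
  by exists (liftA t1' ++ liftB t2'); apply: glue.
Qed.

Lemma kos_fwdA : koszul P Q th -> koszul A C t1.
Proof.
move=> [_ [p1 p2 p3]]; split => //; split.
- move=> r; have [s E] := p1 (r, 0); exists (projA s).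
  by rewrite kdiff0_prod in E; apply: (congr1 fst E).
- move=> s1 E.
  have E' : kdiff0 (liftA s1) = 0.
    by rewrite kdiff0_prod projA_liftA projB_liftA E kdiff0_zB.
  have [t Et] := p2 _ E'; exists (projA t) => G g Hg.
  have := Et G _ (balliftA Hg); rewrite kd /= (bal_f0 Hg) tsum0 addr0 => ->.
  by rewrite /tsum /liftA big_map.
- move=> n s1 E.
  have E' : tensor_eq (M := gring_bimod P) (kdiff th (liftA s1)) [::].
    move=> G f Hf; rewrite kd projA_liftA projB_liftA kd_zeroB; last first.
      by move=> c; apply: (bal_f0 Hf).
    by rewrite (E _ _ (balA Hf)) /tsum !big_nil addr0.
  have [t Et] := p3 _ _ E'; exists (projA t) => G g Hg.
  have := Et G _ (balliftA Hg); rewrite kd /= (bal_f0 Hg) tsum0 addr0 => ->.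
  by rewrite /tsum /liftA big_map.
Qed.

Lemma kos_fwdB : koszul P Q th -> koszul B D t2.
Proof.
move=> [_ [p1 p2 p3]]; split => //; split.
- move=> r; have [s E] := p1 (0, r); exists (projB s).
  by rewrite kdiff0_prod in E; apply: (congr1 snd E).
- move=> s1 E.
  have E' : kdiff0 (liftB s1) = 0.
    by rewrite kdiff0_prod projB_liftB projA_liftB E kdiff0_zA.
  have [t Et] := p2 _ E'; exists (projB t) => G g Hg.
  have := Et G _ (balliftB Hg); rewrite kd /= (bal_f0 Hg) tsum0 add0r => ->.
  by rewrite /tsum /liftB big_map.
- move=> n s1 E.
  have E' : tensor_eq (M := gring_bimod P) (kdiff th (liftB s1)) [::].
    move=> G f Hf; rewrite kd projB_liftB projA_liftB kd_zeroA; last first.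
      by move=> c; apply: (bal_f0 Hf).
    by rewrite (E _ _ (balB Hf)) /tsum !big_nil add0r.
  have [t Et] := p3 _ _ E'; exists (projB t) => G g Hg.
  have := Et G _ (balliftB Hg); rewrite kd /= (bal_f0 Hg) tsum0 add0r => ->.
  by rewrite /tsum /liftB big_map.
Qed.

End Kos.


Theorem proposition4p11 (R S : pzRingType) (HR : semisimple R) (HS : semisimple S)
  (A : gring R) (C : gcoring R) (theta1 : bcar (ccomp C 1) -> gcar A)
  (B : gring S) (D : gcoring S) (theta2 : bcar (ccomp D 1) -> gcar B) :
  almost_koszul A C theta1 -> almost_koszul B D theta2 ->
  almost_koszul (gring_prod A B) (gcoring_sum C D) (theta_prod theta1 theta2) /\
  (koszul (gring_prod A B) (gcoring_sum C D) (theta_prod theta1 theta2) <->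
   koszul A C theta1 /\ koszul B D theta2).
Proof.
move=> HA HB.
have AK : almost_koszul (gring_prod A B) (gcoring_sum C D) (theta_prod theta1 theta2).
  have [RA CC TA _] := HA; have [RB CD TB _] := HB.
  split; [exact: prod_ring|exact: prod_coring|exact: prod_theta|exact: (prod_mu HA HB)].
split => //; split.
- by move=> K; split; [exact: (kos_fwdA HA HB K)|exact: (kos_fwdB HA HB K)].
- by move=> [KA KB]; split => //; exact: (kos_back HA HB KA KB).
Qed.
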